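(* There exists a network $G$ with three sources $s_1,s_2,s_3$ and three terminals $t_1,t_2,t_3$ in which every source–terminal pair $(s_i,t_j)$ is connected by at least one directed path, but for every finite field $\mathbb{F}$ with $|\mathbb{F}|\ge 2$ there is no network code (linear or nonlinear, scalar) over $\mathbb{F}$ under which every terminal can recover $X_1+X_2+X_3$ with zero error.
   Context: A network is a finite directed acyclic graph (parallel edges allowed) in which every edge has unit capacity and carries one symbol of a finite field $\mathbb{F}$ per use. Sources are vertices with no incoming edges; source $s_i$ holds $X_i\in\mathbb{F}$, the $X_i$ independent and uniformly distributed. Terminals are vertices with no outgoing edges. A (scalar) network code assigns to each edge leaving a source $s_i$ a function of $X_i$, and to each edge leaving a non-source vertex $v$ a function of the symbols on the edges entering $v$, with values in $\mathbb{F}$. A terminal recovers a quantity with zero error if that quantity is a (deterministic) function of the symbols on the terminal's incoming edges, for all values of the sources. *)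

(* Defs.v *)
From HB Require Import structures.
From mathcomp Require Import all_boot all_order all_algebra.
Set Implicit Arguments. Unset Strict Implicit. Unset Printing Implicit Defensive.
Import GRing.Theory.
Local Open Scope ring_scope.

Record network := Network {
  vertex : finType;
  edge : finType;
  tail : edge -> vertex;
  head : edge -> vertex }.

Definition adj (N : network) : rel (vertex N) :=
  fun u v => [exists e : edge N, (tail e == u) && (head e == v)].

Definition acyclic (N : network) : Prop :=
  forall e : edge N, ~ connect (@adj N) (head e) (tail e).

Definition dpath (N : network) (u v : vertex N) : Prop :=
  exists e : edge N, tail e = u /\ connect (@adj N) (head e) v.

Definition is_source (N : network) (v : vertex N) : Prop :=
  forall e : edge N, head e <> v.
Definition is_terminal (N : network) (v : vertex N) : Prop :=
  forall e : edge N, tail e <> v.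

(* Sources are indexed by src : 'I_k -> vertex N.
   src_enc e : the function of X_i put on an edge e leaving source s_i;
   enc e : the function put on an edge e leaving a non-source vertex, which is
   required to depend only on the symbols of the edges entering tail e. *)
Record network_code (N : network) (F : Type) := NetworkCode {
  src_enc : edge N -> F -> F;
  enc : edge N -> (edge N -> F) -> F;
  enc_local : forall e (y y' : edge N -> F),
    (forall e', head e' = tail e -> y e' = y' e') -> enc e y = enc e y' }.

(* y : edge N -> F is the family of edge symbols induced by the code c when
   the sources carry x. (In an acyclic network such y exists and is unique.) *)
Definition induced (N : network) (F : Type) (k : nat) (src : 'I_k -> vertex N)
    (c : network_code N F) (x : 'I_k -> F) (y : edge N -> F) : Prop :=
  forall e : edge N,
    (forall i, tail e = src i -> y e = src_enc c e (x i)) /\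
    ((forall i, tail e <> src i) -> y e = enc c e y).

Definition recovers (N : network) (F : Type) (k : nat) (src : 'I_k -> vertex N)
    (c : network_code N F) (t : vertex N) (q : ('I_k -> F) -> F) : Prop :=
  exists dec : (edge N -> F) -> F,
    (forall y y' : edge N -> F, (forall e, head e = t -> y e = y' e) -> dec y = dec y') /\
    forall (x : 'I_k -> F) (y : edge N -> F), induced src c x y -> dec y = q x.

(* Main.v *)
Require Import Defs.
From HB Require Import structures.
From mathcomp Require Import all_boot all_order all_algebra.
Import GRing.Theory.
Local Open Scope ring_scope.

Definition tl : seq nat := [:: 0;1;1;2;3;4;5;2;6;0;5;6]%N.
Definition hd : seq nat := [:: 3;3;4;4;5;6;7;7;8;8;9;9]%N.
Definition dp : seq nat := [:: 0;0;0;0;1;1;2;0;2;0;2;2]%N.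
Definition N0 : network := @Network 'I_10 'I_12 (fun e => inord (nth 0%N tl e)) (fun e => inord (nth 0%N hd e)).
Definition src0 (i : 'I_3) : vertex N0 := inord i.
Definition tgt0 (i : 'I_3) : vertex N0 := inord (7 + i).
Definition depth (e : edge N0) : nat := nth 0%N dp e.
Definition E (k : nat) : edge N0 := inord k.

Lemma iotaP (P : pred nat) n : all P (iota 0 n) -> forall m, (m < n)%N -> P m.
Proof. by move=> /allP H m Hm; apply: H; rewrite mem_iota. Qed.

Lemma tE (e : edge N0) : val (tail e) = nth 0%N tl e.
Proof.
rewrite /= inordK //; apply: (@iotaP (fun k => nth 0%N tl k < 10)%N 12) => //.
Qed.
Lemma hE (e : edge N0) : val (Defs.head e) = nth 0%N hd e.
Proof.
rewrite /= inordK //; apply: (@iotaP (fun k => nth 0%N hd k < 10)%N 12) => //.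
Qed.

Lemma adjv k : (k < 12)%N -> @adj N0 (inord (nth 0%N tl k)) (inord (nth 0%N hd k)).
Proof.
move=> Hk; apply/existsP; exists (inord k) => /=.
by rewrite (inordK Hk) !eqxx.
Qed.

Ltac reach n := match n with
 | O => apply: connect0
 | S ?m => first [ apply: connect0
   | solve [apply: connect_trans; [apply: connect1; apply: (@adjv 0%N isT) | reach m]] | solve [apply: connect_trans; [apply: connect1; apply: (@adjv 1%N isT) | reach m]] | solve [apply: connect_trans; [apply: connect1; apply: (@adjv 2%N isT) | reach m]] | solve [apply: connect_trans; [apply: connect1; apply: (@adjv 3%N isT) | reach m]] | solve [apply: connect_trans; [apply: connect1; apply: (@adjv 4%N isT) | reach m]] | solve [apply: connect_trans; [apply: connect1; apply: (@adjv 5%N isT) | reach m]] | solve [apply: connect_trans; [apply: connect1; apply: (@adjv 6%N isT) | reach m]] | solve [apply: connect_trans; [apply: connect1; apply: (@adjv 7%N isT) | reach m]] | solve [apply: connect_trans; [apply: connect1; apply: (@adjv 8%N isT) | reach m]] | solve [apply: connect_trans; [apply: connect1; apply: (@adjv 9%N isT) | reach m]] | solve [apply: connect_trans; [apply: connect1; apply: (@adjv 10%N isT) | reach m]] | solve [apply: connect_trans; [apply: connect1; apply: (@adjv 11%N isT) | reach m]] ]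
 end.

Lemma dpath_all i j : dpath (src0 i) (tgt0 j).
Proof.
case: i => [[|[|[|//]]] Hi]; case: j => [[|[|[|//]]] Hj];
 [ exists (@Ordinal 12 0 isT) | exists (@Ordinal 12 9 isT) | exists (@Ordinal 12 0 isT)
 | exists (@Ordinal 12 1 isT) | exists (@Ordinal 12 2 isT) | exists (@Ordinal 12 1 isT)
 | exists (@Ordinal 12 7 isT) | exists (@Ordinal 12 3 isT) | exists (@Ordinal 12 3 isT) ];
 (split; [reflexivity | ]).
all: rewrite /=.
all: reach 3%N.
Qed.

Lemma tlt (e : edge N0) : (nth 0%N tl e < nth 0%N hd e)%N.
Proof. by apply: (@iotaP (fun k => nth 0%N tl k < nth 0%N hd k)%N 12) => //. Qed.

Lemma conn_le (u v : vertex N0) : connect (@adj N0) u v -> (val u <= val v)%N.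
Proof.
move/connectP=> [p Hp ->]; elim: p u Hp => //= w p IH u /andP[Huw Hp].
apply: leq_trans (IH w Hp); apply: ltnW.
move/existsP: Huw => [e /andP[/eqP<- /eqP<-]]; rewrite tE hE; exact: tlt.
Qed.

Lemma acyc : acyclic N0.
Proof. by move=> e /conn_le; rewrite hE tE leqNgt tlt. Qed.

Lemma v10 (i : 'I_3) : (val i < 10)%N.
Proof. exact: leq_trans (ltn_ord i) _. Qed.
Lemma t10 (i : 'I_3) : (7 + val i < 10)%N.
Proof. by case: i => [[|[|[|]]] ]. Qed.

Lemma src_inj : injective src0.
Proof. by move=> i i' /(congr1 val); rewrite /= !inordK ?v10 // => /val_inj. Qed.
Lemma tgt_inj : injective tgt0.
Proof. by move=> i i' /(congr1 val); rewrite /= !inordK ?t10 // => /addnI /val_inj. Qed.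

Lemma is_src (v : vertex N0) : is_source v <-> exists i, v = src0 i.
Proof.
split.
- move=> H; case: (ltnP (val v) 3) => Hv.
    by exists (Ordinal Hv); apply: val_inj; rewrite /= (inordK (ltn_ord v)).
  have := @iotaP (fun m => (m < 3) || has (fun k => nth 0%N hd k == m) (iota 0 12))%N 10 isT _ (ltn_ord v).
  rewrite ltnNge Hv orFb => /hasP [k]; rewrite mem_iota /= => Hk /eqP Hkv.
  by case: (H (Ordinal Hk)); apply: val_inj; rewrite hE.
- move=> [i ->] e /(congr1 val); rewrite hE /= inordK ?v10 // => Hi.
  have := @iotaP (fun k => 3 <= nth 0%N hd k)%N 12 isT _ (ltn_ord e).
  by rewrite /= Hi leqNgt ltn_ord.
Qed.

Lemma is_tgt (v : vertex N0) : is_terminal v <-> exists i, v = tgt0 i.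
Proof.
split.
- move=> H; case: (leqP 7 (val v)) => Hv.
    have Hl : (val v - 7 < 3)%N by rewrite ltn_subLR // (ltn_ord v).
    by exists (Ordinal Hl); apply: val_inj; rewrite /= inordK ?subnKC //  -(subnKC Hv) ltn_add2l.
  have := @iotaP (fun m => (7 <= m) || has (fun k => nth 0%N tl k == m) (iota 0 12))%N 10 isT _ (ltn_ord v).
  rewrite leqNgt Hv orFb => /hasP [k]; rewrite mem_iota /= => Hk /eqP Hkv.
  by case: (H (Ordinal Hk)); apply: val_inj; rewrite tE.
- move=> [i ->] e /(congr1 val); rewrite tE /= inordK ?t10 // => Hi.
  have := @iotaP (fun k => nth 0%N tl k < 7)%N 12 isT _ (ltn_ord e).
  by rewrite /= Hi ltnNge leq_addr.
Qed.

Section Main.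
Variable F : finFieldType.
Variable c : network_code N0 F.

Fixpoint Y (n : nat) (x : 'I_3 -> F) : edge N0 -> F :=
  match n with
  | O => fun _ => 0
  | S m => fun e => if (val (tail e) < 3)%N then src_enc c e (x (inord (val (tail e))))
                    else enc c e (Y m x)
  end.

Lemma dep_lt (e e' : edge N0) : Defs.head e' = tail e -> (depth e' < depth e)%N.
Proof.
move=> /(congr1 val); rewrite hE tE => H.
have := @iotaP (fun k => all (fun k' => (nth 0%N hd k' == nth 0%N tl k) ==> (nth 0%N dp k' < nth 0%N dp k)) (iota 0 12))%N 12 isT _ (ltn_ord e).
move=> /allP /(_ (val e')); rewrite mem_iota ltn_ord H eqxx /=; exact.
Qed.

Lemma dep_le (e : edge N0) : (depth e <= 2)%N.
Proof. exact: (@iotaP (fun k => nth 0%N dp k <= 2)%N 12 isT _ (ltn_ord e)). Qed.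

Lemma Ystable x n e : (depth e < n)%N -> Y n x e = Y n.+1 x e.
Proof.
elim: n e => // n IH e He /=.
case: ifP => // _; apply: enc_local => e' He'; apply: IH.
rewrite ltnS in He; exact: leq_trans (dep_lt _ _ He') He.
Qed.

Definition yy x := Y 3 x.

Lemma YS n x e : Y n.+1 x e = if (val (tail e) < 3)%N then src_enc c e (x (inord (val (tail e))))
                    else enc c e (Y n x).
Proof. by []. Qed.

Lemma yy_ind x : induced src0 c x (yy x).
Proof.
move=> e; split.
- move=> i Hi; rewrite /yy YS Hi /= (inordK (v10 i)) ltn_ord.
  by rewrite inord_val.
- move=> Hn; rewrite /yy YS.
  case: ifP => Ht.
    by case: (Hn (inord (val (tail e)))); rewrite /src0 (inordK Ht) inord_val.
  apply: enc_local => e' He'; apply: Ystable.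
  exact: leq_trans (dep_lt _ _ He') (dep_le e).
Qed.


Lemma into (m : nat) (S : seq nat) (e : edge N0) :
  all (fun k => (nth 0%N hd k == m) ==> (k \in S)) (iota 0 12) -> val (Defs.head e) = m -> val e \in S.
Proof.
move=> /allP H Hm; have := H (val e); rewrite mem_iota ltn_ord -hE Hm eqxx; apply => //.
Qed.

Lemma agree_src (x x' : 'I_3 -> F) (e : edge N0) : (val (tail e) < 3)%N ->
  x (inord (val (tail e))) = x' (inord (val (tail e))) -> yy x e = yy x' e.
Proof. by move=> Ht Hx; rewrite /yy !YS Ht Hx. Qed.

Lemma agree_nsrc (x x' : 'I_3 -> F) (e : edge N0) : ~~ (val (tail e) < 3)%N ->
  (forall e', Defs.head e' = tail e -> yy x e' = yy x' e') -> yy x e = yy x' e.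
Proof.
move=> Ht H.
have Hn : forall i, tail e <> src0 i.
  move=> i Hi; move: Ht; rewrite Hi /src0 /= inordK ?v10 ?ltn_ord //.
rewrite ((yy_ind x e).2 Hn) ((yy_ind x' e).2 Hn); exact: enc_local.
Qed.

Lemma relay (x x' : 'I_3 -> F) (e : edge N0) (m k : nat) (Hk : (k < 12)%N) : val (tail e) = m -> (3 <= m)%N ->
  all (fun k' => (nth 0%N hd k' == m) ==> (k' \in [:: k])) (iota 0 12) ->
  yy x (Ordinal Hk) = yy x' (Ordinal Hk) -> yy x e = yy x' e.
Proof.
move=> Ht Hm Hall Hy; apply: agree_nsrc; first by rewrite Ht -leqNgt.
move=> e' He'; have := @into m [:: k] e' Hall; rewrite He' Ht inE => /(_ erefl) /eqP Hv.
by have -> : e' = Ordinal Hk by apply: val_inj.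
Qed.

Definition X (a b d : F) : 'I_3 -> F :=
  fun i => if nat_of_ord i == 0%N then a else if nat_of_ord i == 1%N then b else d.

Lemma sumX a b d : \sum_(i < 3) X a b d i = a + b + d.
Proof. by rewrite !big_ord_recr big_ord0 /= add0r. Qed.

Lemma Xk a b d k : (k < 3)%N -> X a b d (inord k) = if k == 0%N then a else if k == 1%N then b else d.
Proof. by move=> Hk; rewrite /X inordK. Qed.

Definition y4 x := yy x (@Ordinal 12 4 isT).
Definition y5 x := yy x (@Ordinal 12 5 isT).

Lemma L4 a b d d' : y4 (X a b d) = y4 (X a b d').
Proof.
apply: agree_nsrc; first by rewrite tE.
move=> e' He'; have := @into 3 [:: 0; 1]%N e' isT.
rewrite He' tE => /(_ erefl); rewrite !inE => /orP [] /eqP Hv;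
  apply: agree_src; rewrite tE Hv // !Xk //.
Qed.

Lemma L5 a a' b d : y5 (X a b d) = y5 (X a' b d).
Proof.
apply: agree_nsrc; first by rewrite tE.
move=> e' He'; have := @into 4 [:: 2; 3]%N e' isT.
rewrite He' tE => /(_ erefl); rewrite !inE => /orP [] /eqP Hv;
  apply: agree_src; rewrite tE Hv // !Xk //.
Qed.


Lemma no_code : ~ (forall j, recovers src0 c (tgt0 j) (fun x => \sum_(i < 3) x i)).
Proof.
move=> Hrec.
have [d0 [l0 c0]] := Hrec (@Ordinal 3 0 isT).
have [d1 [l1 c1]] := Hrec (@Ordinal 3 1 isT).
have [d2 [l2 c2]] := Hrec (@Ordinal 3 2 isT).
have T1 : forall a b a' b', y4 (X a b 0) = y4 (X a' b' 0) -> a + b = a' + b'.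
  move=> a b a' b' H.
  have := c0 _ _ (yy_ind (X a b 0)); have := c0 _ _ (yy_ind (X a' b' 0)).
  rewrite !sumX !addr0 => <- <-.
  apply: l0 => e He.
  have := @into 7 [:: 6; 7]%N e isT; rewrite He /= inordK // => /(_ erefl).
  rewrite !inE => /orP [] /eqP Hv.
  - by apply: (@relay _ _ e 5 4 isT) => //; rewrite tE Hv.
  - by apply: agree_src; rewrite tE Hv // !Xk.
have T2 : forall b d b' d', y5 (X 0 b d) = y5 (X 0 b' d') -> b + d = b' + d'.
  move=> b d b' d' H.
  have := c1 _ _ (yy_ind (X 0 b d)); have := c1 _ _ (yy_ind (X 0 b' d')).
  rewrite !sumX !add0r => <- <-.
  apply: l1 => e He.
  have := @into 8 [:: 8; 9]%N e isT; rewrite He /= inordK // => /(_ erefl).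
  rewrite !inE => /orP [] /eqP Hv.
  - by apply: (@relay _ _ e 6 5 isT) => //; rewrite tE Hv.
  - by apply: agree_src; rewrite tE Hv // !Xk.
have h4 : injective (fun s => y4 (X s 0 0)).
  by move=> s s' /T1; rewrite !addr0.
have h5 : injective (fun s => y5 (X 0 0 s)).
  by move=> s s' /T2; rewrite !add0r.
case: (injF_bij h4) => g4 _ K4.
case: (injF_bij h5) => g5 _ K5.
have E4 : y4 (X 1 0 0) = y4 (X 0 1 0).
  have := K4 (y4 (X 0 1 0)); set s := g4 _ => Hs.
  have := T1 _ _ _ _ Hs; rewrite !addr0 add0r => Hs1.
  by rewrite Hs1 in Hs.
have E5 : y5 (X 0 0 0) = y5 (X 0 1 (-1)).
  have := K5 (y5 (X 0 1 (-1))); set t := g5 _ => Ht.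
  have := T2 _ _ _ _ Ht; rewrite !add0r subrr => Ht1.
  by rewrite Ht1 in Ht.
have := c2 _ _ (yy_ind (X 1 0 0)); have := c2 _ _ (yy_ind (X 0 1 (-1))).
rewrite !sumX !addr0 add0r subrr => H0 H1.
suff : d2 (yy (X 1 0 0)) = d2 (yy (X 0 1 (-1))).
  by rewrite H0 H1 => /eqP; rewrite oner_eq0.
apply: l2 => e He.
have := @into 9 [:: 10; 11]%N e isT; rewrite He /= inordK // => /(_ erefl).
rewrite !inE => /orP [] /eqP Hv.
- apply: (@relay _ _ e 5 4 isT) => //; first by rewrite tE Hv.
  by rewrite -/(y4 _) E4 (L4 _ _ _ (-1)).
- apply: (@relay _ _ e 6 5 isT) => //; first by rewrite tE Hv.
  by rewrite -/(y5 _) (L5 _ 0) E5.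
Qed.

End Main.

Theorem mainTheorem5 :
  exists (N : network) (src tgt : 'I_3 -> vertex N),
    acyclic N /\ injective src /\ injective tgt /\
    (forall v, is_source v <-> exists i, v = src i) /\
    (forall v, is_terminal v <-> exists j, v = tgt j) /\
    (forall i j, dpath (src i) (tgt j)) /\
    forall F : finFieldType, (2 <= #|F|)%N ->
      ~ exists c : network_code N F,
          forall j, recovers src c (tgt j) (fun x => \sum_(i < 3) x i).
Proof.
exists N0, src0, tgt0.
do 6 (split; first by [exact: acyc | exact: src_inj | exact: tgt_inj | exact: is_src | exact: is_tgt | exact: dpath_all]).
by move=> F _ [c Hc]; exact: (@no_code F c Hc).
Qed.
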